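(* In the setting of the context, consider a Case 1 spacetime ($x_-(v)\equiv0$). If there exists $\alpha$ with $0<\alpha<1$ such that $\lim_{v\to\infty}x_+(v)\exp\left[\frac{1-\alpha}{2}h_cX_+(v)\right]>0$ (including the case where the left-hand side diverges to $+\infty$), then the spacetime is of Type 2, i.e. there exist radially outgoing null geodesics strictly between the two AHs that never cross the outer AH, and the event horizon lies in the region $x>0$.
   Context: Spherically symmetric spacetime $ds^2=-f(v,r)A(v,r)^2dv^2+2A(v,r)\,dr\,dv+r^2d\Omega^2$ with $A>0$, $f,A\to1$ as $r\to\infty$, $f(v,0)=1$, $\partial_rf(v,0)=\partial_rA(v,0)=0$; $f(v,\cdot)$ has exactly two zeros $r_+(v)>r_-(v)$ (outer/inner apparent horizons, AHs), $f=F(r-r_+)(r-r_-)$ with $F>0$, and $h=AF>0$. Assumptions: $\partial_v r_+<0$; $r_\pm(v)\to r_c$ as $v\to\infty$; the sign of $\partial_v r_-$ is constant; the $v\to\infty$ limits of $A,F,h$ behave as analytic functions of $r$, so all $\partial_r^n h$ converge as $v\to\infty$; $h_c=\lim_{v\to\infty}h(v,r_c)$. With $x=r-r_c$, $x_\pm=r_\pm-r_c$, and $h$ regarded as a function of $(v,x)$, radially outgoing null geodesics solve $dx/dv=\tfrac12h(v,x)(x-x_+(v))(x-x_-(v))$. $X_+$ is a primitive of $x_+$. Case 1 means $\partial_v r_-=0$. Type 1 (Case 1) means every outgoing null geodesic strictly between the two AHs crosses the outer AH (the inner AH is the event horizon); Type 2 means there is an event horizon strictly outside the inner AH. *)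

(* Defs.v *)
From Stdlib Require Import Reals.
From Coquelicot Require Import Coquelicot.
Open Scope R_scope.

(* A radially outgoing null geodesic, in the coordinate x = r - r_c, starting
   at advanced time v0: a function x(v) solving, for every v >= v0,
     dx/dv = 1/2 h(v,x) (x - x_+(v)) (x - x_-(v)). *)
Definition outgoing_geodesic (h : R -> R -> R) (xp xm : R -> R)
    (v0 : R) (x : R -> R) : Prop :=
  forall v, v0 <= v ->
    is_derive x v (1/2 * h v (x v) * (x v - xp v) * (x v - xm v)).

Definition between_AHs (xp xm : R -> R) (v y : R) : Prop :=
  xm v < y /\ y < xp v.

(* Type 2: there is a radially outgoing null geodesic strictly between the two
   AHs which never crosses the outer AH (it stays strictly between the AHs for
   all later times); hence the event horizon lies strictly outside the inner
   AH, i.e. in the region x > x_-. *)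
Definition type2 (h : R -> R -> R) (xp xm : R -> R) : Prop :=
  exists v0 (x : R -> R),
    outgoing_geodesic h xp xm v0 x /\
    forall v, v0 <= v -> between_AHs xp xm v (x v).

(* Main.v *)
Require Import Defs.
From Stdlib Require Import Reals Lra Classical.
From Coquelicot Require Import Coquelicot.
Open Scope R_scope.
Lemma ball_R (t e u : R) : ball t e u <-> Rabs (u - t) < e.
Proof. reflexivity. Qed.

Lemma cont_le (f : R -> R) a t C : a < t -> continuous f t ->
  (forall u, a <= u < t -> f u <= C) -> f t <= C.
Proof.
  intros Hat Hc Hu.
  destruct (Rle_or_lt (f t) C) as [H|H]; [exact H|exfalso].
  assert (He : 0 < f t - C) by lra.
  destruct (proj1 (filterlim_locally f (f t)) Hc (mkposreal _ He)) as [d Hd].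
  set (u := t - Rmin (pos d) (t - a) / 2).
  assert (Hm1 : 0 < Rmin (pos d) (t - a)) by (apply Rmin_pos; [apply cond_pos|lra]).
  assert (Hm2 : Rmin (pos d) (t - a) <= d) by apply Rmin_l.
  assert (Hm3 : Rmin (pos d) (t - a) <= t - a) by apply Rmin_r.
  assert (Hb : ball t d u).
  { apply ball_R. unfold u. rewrite Rabs_left; lra. }
  specialize (Hd u Hb). apply ball_R in Hd. simpl in Hd.
  assert (f u <= C). { apply Hu. unfold u. clear Hd Hb. set (mm := Rmin d (t - a)) in *. clearbody mm. split; lra. }
  apply Rabs_def2 in Hd. unfold minus, plus, opp in Hd; simpl in Hd. lra.
Qed.

Lemma real_ind (G : R -> Prop) a : G a ->
  (forall t, a <= t -> G t -> exists e, 0 < e /\ forall u, t <= u < t + e -> G u) ->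
  (forall t, a < t -> (forall u, a <= u < t -> G u) -> G t) ->
  forall t, a <= t -> G t.
Proof.
  intros Ga Hopen Hlim b Hab.
  apply NNPP; intro Gb.
  set (S := fun s => a <= s <= b /\ forall u, a <= u <= s -> G u).
  assert (Hbd : bound S) by (exists b; intros s [Hs _]; lra).
  assert (Hne : exists s, S s) by (exists a; split; [lra| intros u Hu; replace u with a by lra; exact Ga]).
  destruct (completeness S Hbd Hne) as [m [Hub Hlub]].
  assert (Ham : a <= m) by (apply Hub; split; [lra| intros u Hu; replace u with a by lra; exact Ga]).
  assert (Hmb : m <= b) by (apply Hlub; intros s [Hs _]; lra).
  assert (Hbelow : forall u, a <= u < m -> G u).
  { intros u Hu. apply NNPP; intro Gu.
    assert (m <= u); [|lra].
    apply Hlub. intros s [Hs Hs2]. destruct (Rle_or_lt s u) as [|Hsu]; [lra|].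
    exfalso. apply Gu, Hs2; lra. }
  assert (Gm : G m).
  { destruct (Req_dec m a) as [->|Hne2]; [exact Ga|]. apply Hlim; [lra|exact Hbelow]. }
  destruct (Hopen m Ham Gm) as [e [He Hu]].
  assert (Hall : forall u, a <= u < m + e -> G u).
  { intros u Hu1. destruct (Rlt_or_le u m); [apply Hbelow; lra| apply Hu; lra]. }
  destruct (Req_dec m b) as [->|Hmb2]; [apply Gb, Hall; lra|].
  set (s' := Rmin (m + e/2) b).
  assert (Hs1 : s' <= m + e/2) by apply Rmin_l.
  assert (Hs2 : s' <= b) by apply Rmin_r.
  assert (Hs3 : m < s') by (apply Rmin_glb_lt; lra).
  assert (S s') by (split; [lra| intros u Hu'; apply Hall; lra]).
  specialize (Hub s' H). lra.
Qed.

Lemma deriv_xE (x X : R -> R) k t dx dX : is_derive x t dx -> is_derive X t dX ->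
  is_derive (fun v => x v * exp (k * X v)) t (exp (k * X t) * (dx + k * dX * x t)).
Proof.
  intros Hx HX.
  assert (H := is_derive_mult x (fun v => exp (k * X v)) t dx _ Hx
     (is_derive_comp exp (fun v => k * X v) t _ _ (is_derive_exp _) (is_derive_scal X t k dX HX))
     (fun n m => Rmult_comm n m)).
  eapply is_derive_ext; [intro; reflexivity|].
  replace (exp (k * X t) * (dx + k * dX * x t)) with
   (plus (mult dx (exp (k * X t))) (mult (x t) (scal (k * dX) (exp (k * X t))))).
  exact H.
  unfold plus, mult, scal; simpl. unfold mult; simpl. ring.
Qed.

Lemma deriv_oxE (x X : R -> R) k t dx dX : is_derive x t dx -> is_derive X t dX ->
  is_derive (fun v => - (x v * exp (k * X v))) t (- (exp (k * X t) * (dx + k * dX * x t))).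
Proof.
  intros Hx HX. apply (is_derive_opp (fun v => x v * exp (k * X v))). apply deriv_xE; assumption.
Qed.

Lemma mvt_le (f df : R -> R) a b : a <= b ->
  (forall t, a <= t <= b -> is_derive f t (df t)) ->
  (forall t, a <= t <= b -> df t <= 0) -> f b <= f a.
Proof.
  intros Hab Hd Hs.
  destruct (MVT_gen f a b df) as [c [Hc He]].
  - intros t Ht. rewrite Rmin_left in Ht by lra. rewrite Rmax_right in Ht by lra. apply Hd; lra.
  - intros t Ht. rewrite Rmin_left in Ht by lra. rewrite Rmax_right in Ht by lra.
    apply continuity_pt_filterlim. apply (ex_derive_continuous f t).
    eexists. apply Hd. lra.
  - rewrite Rmin_left in Hc by lra. rewrite Rmax_right in Hc by lra.
    assert (df c <= 0) by (apply Hs; lra).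
    assert (df c * (b - a) <= 0) by (apply Rmult_le_0_r; lra). lra.
Qed.
Lemma alg1 a hc x p h : 0 < a < 1 -> 0 < hc -> 0 < x -> x < a / (2 - a) * p ->
  hc - a * hc / 2 < h ->
  1/2 * h * (x - p) * (x - 0) + (1 - a) / 2 * hc * p * x <= 0.
Proof.
  intros Ha Hhc Hx Hxp Hh.
  assert (Hp : (2 - a) * x < a * p).
  { apply (Rmult_lt_compat_l (2 - a)) in Hxp; [|lra].
    replace ((2 - a) * (a / (2 - a) * p)) with (a * p) in Hxp by (field; lra). exact Hxp. }
  assert (H1 : (h - (hc - a*hc/2)) * (x - p) <= 0).
  { assert (0 < h - (hc - a*hc/2)) by lra. assert (x - p < 0) by nra. nra. }
  assert (H2 : h * (x - p) + (1 - a) * hc * p <= 0) by nra.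
  nra.
Qed.

Lemma alg2 a hc x p h : 0 < a < 1 -> 0 < hc -> 0 < x -> x < p ->
  h < hc + a * hc / 2 -> 0 < h ->
  0 <= 1/2 * h * (x - p) * (x - 0) + hc * p * x.
Proof.
  intros Ha Hhc Hx Hxp Hh Hh0.
  assert (0 < p) by lra.
  assert (0 < h * x) by nra.
  assert (h < 2 * hc) by nra.
  assert (h * p < 2 * hc * p) by nra.
  assert (h * (x - p) + 2 * hc * p >= 0) by nra.
  nra.
Qed.

Lemma exd_cont (f : R -> R) x : ex_derive f x -> continuous f x.
Proof. intro H. apply (ex_derive_continuous f x H). Qed.

Lemma cont_pos (f : R -> R) t : continuous f t -> 0 < f t ->
  exists e, 0 < e /\ forall u, Rabs (u - t) < e -> 0 < f u.
Proof.
  intros Hc Hf.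
  destruct (proj1 (filterlim_locally f (f t)) Hc (mkposreal _ Hf)) as [d Hd].
  exists d. split; [apply cond_pos|]. intros u Hu.
  specialize (Hd u Hu). apply ball_R in Hd. simpl in Hd.
  apply Rabs_def2 in Hd. unfold minus, plus, opp in Hd; simpl in Hd. lra.
Qed.

Lemma ev_lower (f : R -> R) (L : Rbar) : is_lim f p_infty L -> Rbar_lt 0 L ->
  exists c M, 0 < c /\ forall v, M < v -> c < f v.
Proof.
  intros HL HLp. destruct L as [l| |]; simpl in HLp; try contradiction.
  - assert (Hl : 0 < l / 2) by lra.
    assert (HP : Rbar_locally (Finite l) (fun y => l / 2 < y)).
    { exists (mkposreal _ Hl). intros y Hy. apply ball_R in Hy. simpl in Hy.
      apply Rabs_def2 in Hy. unfold minus, plus, opp in Hy; simpl in Hy. lra. }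
    destruct (HL _ HP) as [M HM]. exists (l/2), M. split; [lra|exact HM].
  - assert (HP : Rbar_locally p_infty (fun y => 1 < y)) by (exists 1; auto).
    destruct (HL _ HP) as [M HM]. exists 1, M. split; [lra|exact HM].
Qed.

Lemma ev_small (f : R -> R) : is_lim f p_infty 0 ->
  forall eps, 0 < eps -> exists M, forall v, M < v -> Rabs (f v) < eps.
Proof.
  intros HL eps He.
  assert (HP : Rbar_locally (Finite 0) (fun y => Rabs y < eps)).
  { exists (mkposreal _ He). intros y Hy. apply ball_R in Hy. simpl in Hy.
    unfold minus, plus, opp in Hy; simpl in Hy. replace y with (y + - 0) by ring. exact Hy. }
  destruct (HL _ HP) as [M HM]. exists M. exact HM.
Qed.

Theorem proposition2
  (h : R -> R -> R) (xp xm Xp : R -> R) (hc alpha : R)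
  (Hcase1 : forall v, xm v = 0)
  (Hxp_pos : forall v, xm v < xp v)
  (Hxp_decr : forall v, ex_derive xp v /\ Derive xp v < 0)
  (Hxp_lim : is_lim xp p_infty 0)
  (HXp : forall v, is_derive Xp v (xp v))
  (Hh_pos : forall v y, 0 < h v y)
  (Hh_cont : forall v y, continuous (fun p : R * R => h (fst p) (snd p)) (v, y))
  (Hhc : is_lim (fun v => h v 0) p_infty hc)
  (Hh_reg : forall eps, 0 < eps -> exists V delta, 0 < delta /\
     forall v y, V <= v -> Rabs y < delta -> Rabs (h v y - hc) < eps)
  (Hgeod : forall v0 y0, between_AHs xp xm v0 y0 ->
     exists x : R -> R, x v0 = y0 /\ outgoing_geodesic h xp xm v0 x)
  (Halpha : 0 < alpha < 1)
  (L : Rbar)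
  (HL : is_lim (fun v => xp v * exp ((1 - alpha) / 2 * hc * Xp v)) p_infty L)
  (HLpos : Rbar_lt 0 L) :
  type2 h xp xm.
Proof.
  destruct (ev_lower _ _ HL HLpos) as [c [M2 [Hc HM2]]].
  assert (Hhc0 : 0 < hc).
  { destruct (Rtotal_order hc 0) as [Hn|[H0|Hp]]; [exfalso|exfalso|exact Hp].
    - destruct (Hh_reg (- hc)) as [V [d [Hd HV]]]; [lra|].
      specialize (HV V 0 (Rle_refl _)). rewrite Rabs_R0 in HV. specialize (HV Hd).
      specialize (Hh_pos V 0). apply Rabs_def2 in HV. lra.
    - destruct (ev_small _ Hxp_lim c Hc) as [M3 HM3].
      set (v := Rmax M2 M3 + 1).
      assert (M2 < v) by (unfold v; generalize (Rmax_l M2 M3); lra).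
      assert (M3 < v) by (unfold v; generalize (Rmax_r M2 M3); lra).
      specialize (HM2 v ltac:(assumption)). specialize (HM3 v ltac:(assumption)).
      rewrite H0 in HM2. rewrite Rmult_0_r, Rmult_0_l, exp_0, Rmult_1_r in HM2.
      apply Rabs_def2 in HM3. lra. }
  destruct (Hh_reg (alpha * hc / 2)) as [V [d [Hd HV]]]; [nra|].
  destruct (ev_small _ Hxp_lim d Hd) as [M3 HM3].
  set (k := (1 - alpha) / 2 * hc).
  set (kap := alpha / (2 - alpha)).
  assert (Hkap0 : 0 < kap) by (unfold kap; apply Rdiv_lt_0_compat; lra).
  assert (Hkap1 : kap < 1) by (unfold kap; apply (Rmult_lt_reg_r (2 - alpha)); [lra|];
    field_simplify; lra).
  set (E := fun v => exp (k * Xp v)).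
  set (v0 := Rmax (Rmax V M2) M3 + 1).
  assert (HvV : V < v0) by (unfold v0; generalize (Rmax_l (Rmax V M2) M3) (Rmax_l V M2); lra).
  assert (HvM2 : M2 < v0) by (unfold v0; generalize (Rmax_l (Rmax V M2) M3) (Rmax_r V M2); lra).
  assert (HvM3 : M3 < v0) by (unfold v0; generalize (Rmax_r (Rmax V M2) M3); lra).
  assert (HE : forall v, 0 < E v) by (intro; apply exp_pos).
  assert (Hxpp : forall v, 0 < xp v) by (intro v; specialize (Hxp_pos v); rewrite Hcase1 in Hxp_pos; exact Hxp_pos).
  set (y0 := Rmin (kap * xp v0) (kap * c / E v0) / 2).
  assert (Hm1 : Rmin (kap * xp v0) (kap * c / E v0) <= kap * xp v0) by apply Rmin_l.
  assert (Hm2 : Rmin (kap * xp v0) (kap * c / E v0) <= kap * c / E v0) by apply Rmin_r.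
  assert (Hm0 : 0 < Rmin (kap * xp v0) (kap * c / E v0)).
  { apply Rmin_pos. specialize (Hxpp v0); nra. apply Rdiv_lt_0_compat; [nra|apply HE]. }
  assert (Hy0 : 0 < y0) by (unfold y0; lra).
  assert (Hy1 : y0 < kap * xp v0) by (unfold y0; lra).
  assert (Hy2 : y0 * E v0 < kap * c).
  { assert (y0 < kap * c / E v0) by (unfold y0; lra).
    apply (Rmult_lt_compat_r (E v0)) in H; [|apply HE].
    unfold Rdiv in H. rewrite Rmult_assoc, Rinv_l, Rmult_1_r in H; [exact H|].
    apply Rgt_not_eq, HE. }
  destruct (Hgeod v0 y0) as [x [Hx0 Hgx]].
  { unfold between_AHs. rewrite Hcase1. split; [lra|]. specialize (Hxpp v0). nra. }
  exists v0, x. split; [exact Hgx|].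
  set (dx := fun v => 1 / 2 * h v (x v) * (x v - xp v) * (x v - xm v)).
  assert (Hdx : forall v, v0 <= v -> is_derive x v (dx v)) by exact Hgx.
  assert (Hxc : forall v, v0 <= v -> continuous x v).
  { intros v Hv. apply exd_cont. eexists. apply Hdx, Hv. }
  assert (Hhb : forall v, v0 <= v -> 0 < x v < kap * xp v ->
            hc - alpha * hc / 2 < h v (x v) < hc + alpha * hc / 2).
  { intros v Hv Hxv. assert (Rabs (h v (x v) - hc) < alpha * hc / 2).
    { apply HV; [lra|]. specialize (HM3 v ltac:(lra)).
      rewrite Rabs_pos_eq in HM3 by (apply Rlt_le, Hxpp).
      rewrite Rabs_pos_eq by lra. nra. }
    apply Rabs_def2 in H. lra. }
  assert (Hall : forall t, v0 <= t -> 0 < x t < kap * xp t).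
  { apply real_ind.
    - rewrite Hx0. lra.
    - intros t Ht [Ht1 Ht2].
      destruct (cont_pos x t (Hxc t Ht) Ht1) as [e1 [He1 H1]].
      assert (Hc2 : continuous (fun u => kap * xp u - x u) t).
      { apply exd_cont.
        assert (Ha : ex_derive (fun u => kap * xp u) t) by (apply ex_derive_scal, Hxp_decr).
        assert (Hb : ex_derive x t) by (eexists; apply Hdx, Ht).
        exact (ex_derive_minus _ _ t Ha Hb). }
      destruct (cont_pos _ t Hc2 ltac:(lra)) as [e2 [He2 H2]].
      exists (Rmin e1 e2). split; [apply Rmin_pos; lra|].
      intros u Hu. generalize (Rmin_l e1 e2) (Rmin_r e1 e2); intros.
      assert (Rabs (u - t) < Rmin e1 e2) by (rewrite Rabs_pos_eq; lra).
      split; [apply H1; lra|]. assert (0 < kap * xp u - x u) by (apply H2; lra). lra.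
    - intros t Ht Hbelow.
      assert (Hw : x t * E t <= x v0 * E v0).
      { apply (cont_le (fun v => x v * E v) v0 t _ Ht).
        - apply exd_cont. eexists. unfold E.
          apply deriv_xE; [apply Hdx; lra| apply HXp].
        - intros u Hu.
          apply (mvt_le (fun v => x v * E v)
                  (fun v => exp (k * Xp v) * (dx v + k * xp v * x v))); [lra| |].
          + intros s Hs. apply deriv_xE; [apply Hdx; lra| apply HXp].
          + intros s Hs. assert (Hgs := Hbelow s ltac:(lra)).
            assert (Hh := Hhb s ltac:(lra) Hgs).
            assert (dx s + k * xp s * x s <= 0).
            { unfold dx, k. rewrite Hcase1. apply alg1; try lra; apply Hgs. }
            generalize (HE s); unfold E; nra. }
      assert (Hq : x v0 * exp (hc * Xp v0) <= x t * exp (hc * Xp t)).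
      { assert (- (x t * exp (hc * Xp t)) <= - (x v0 * exp (hc * Xp v0))); [|lra].
        apply (cont_le (fun v => - (x v * exp (hc * Xp v))) v0 t _ Ht).
        - apply exd_cont. eexists.
          apply deriv_oxE; [apply Hdx; lra| apply HXp].
        - intros u Hu.
          apply (mvt_le (fun v => - (x v * exp (hc * Xp v)))
                  (fun v => - (exp (hc * Xp v) * (dx v + hc * xp v * x v)))); [lra| |].
          + intros s Hs. apply deriv_oxE; [apply Hdx; lra| apply HXp].
          + intros s Hs. assert (Hgs := Hbelow s ltac:(lra)).
            assert (Hh := Hhb s ltac:(lra) Hgs).
            assert (0 <= dx s + hc * xp s * x s).
            { unfold dx. rewrite Hcase1. destruct Hgs as [Hg1 Hg2].
              assert (x s < xp s) by (generalize (Hxpp s); nra).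
              apply (alg2 alpha); try lra. apply Hh_pos. }
            generalize (exp_pos (hc * Xp s)); nra. }
      rewrite Hx0 in Hw, Hq.
      split.
      + generalize (exp_pos (hc * Xp v0)) (exp_pos (hc * Xp t)); intros.
        assert (0 < x t * exp (hc * Xp t)) by nra. nra.
      + specialize (HM2 t ltac:(lra)). fold k in HM2. fold (E t) in HM2.
        assert (x t * E t < kap * xp t * E t) by nra.
        generalize (HE t); nra. }
  intros v Hv. unfold between_AHs. rewrite Hcase1.
  specialize (Hall v Hv). specialize (Hxpp v). nra.
Qed.
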